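(* For $\mathcal{E}\in(0,1)$ let $\ell=\pi/T_0$ and $U(z)=u_0(z/\ell)$, so that $U$ is odd, $2\pi$-periodic, $U'(0)>0$, and $\ell^2U''+U-U^3=0$, $\ell^2(U')^2=\frac12[(1-U^2)^2-\mathcal{E}^2]$. Let $a=\frac1\pi\int_0^{2\pi}U(z)\sin z\,dz$. Then, as $\mathcal{E}\to1$, the map $\mathcal{E}\mapsto(\ell,U)\in\mathbb{R}\times H^2_{\rm per}(0,2\pi)$ is uniquely parametrized by the small parameter $a>0$, and $$\mathcal{E}=1-a^2+\mathcal{O}(a^4),\qquad \ell^2=1-\tfrac34a^2+\mathcal{O}(a^4),\qquad U=a\sin(\cdot)+\mathcal{O}_{H^2_{\rm per}(0,2\pi)}(a^3).$$
   Context: For $\mathcal{E}\in(0,1)$, $u_0(x)=\sqrt{1-\mathcal{E}}\,\mathrm{sn}\big(x\sqrt{(1+\mathcal{E})/2},\,k\big)$ with $k=\sqrt{(1-\mathcal{E})/(1+\mathcal{E})}$ (Jacobi elliptic function of modulus $k$); it is odd with $u_0'(0)>0$, satisfies $u_0''+u_0-u_0^3=0$, $(u_0')^2=\frac12[(1-u_0^2)^2-\mathcal{E}^2]$, and has minimal period $2T_0=4\sqrt{2/(1+\mathcal{E})}\,K(k)$, $K$ the complete elliptic integral of the first kind. *)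

(* Defs.v *)
From Stdlib Require Import Reals Lra ClassicalEpsilon.
From Coquelicot Require Import Coquelicot.
Open Scope R_scope.

Definition ellF (k phi : R) : R :=
  RInt (fun t => / sqrt (1 - k ^ 2 * sin t ^ 2)) 0 phi.

Definition ellK (k : R) : R := ellF k (PI / 2).

(* Jacobi amplitude: am(x,k) is the phi with F(phi,k) = x
   (unique for 0 <= k < 1, since F(.,k) is an increasing bijection of R). *)
Definition jam (x k : R) : R :=
  epsilon (inhabits 0) (fun phi => ellF k phi = x).

Definition jsn (x k : R) : R := sin (jam x k).

Definition kmod (E : R) : R := sqrt ((1 - E) / (1 + E)).

Definition u0 (E x : R) : R :=
  sqrt (1 - E) * jsn (x * sqrt ((1 + E) / 2)) (kmod E).

Definition T0 (E : R) : R := 2 * sqrt (2 / (1 + E)) * ellK (kmod E).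

Definition ell (E : R) : R := PI / T0 E.

Definition U (E z : R) : R := u0 E (z / ell E).

Definition acoef (E : R) : R := / PI * RInt (fun z => U E z * sin z) 0 (2 * PI).

Definition H2per_norm (f : R -> R) : R :=
  sqrt (RInt (fun z => f z ^ 2 + Derive f z ^ 2 + Derive_n f 2 z ^ 2) 0 (2 * PI)).

(* Main.v *)
Require Import Defs.
From Stdlib Require Import Reals Lra Psatz ClassicalEpsilon.
From Coquelicot Require Import Coquelicot.
Open Scope R_scope.

Definition w (s t : R) : R := / sqrt (1 - s * sin t ^ 2).

Lemma sin2_bound t : 0 <= sin t ^ 2 <= 1.
Proof. pose proof (SIN_bound t). nra. Qed.

Lemma w_bounds s t : 0 <= s <= 1/2 ->
  1 + s * sin t ^ 2 / 2 <= w s t <= 1 + s * sin t ^ 2 / 2 + (s * sin t ^ 2) ^ 2 /\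
  w s t <= 1 + s * sin t ^ 2.
Proof.
  intros Hs. pose proof (sin2_bound t) as Hb.
  set (y := s * sin t ^ 2).
  assert (Hy : 0 <= y <= 1/2) by (unfold y; nra).
  unfold w. fold y.
  assert (Hq : 0 < sqrt (1 - y)) by (apply sqrt_lt_R0; lra).
  assert (Hq2 : sqrt (1 - y) * sqrt (1 - y) = 1 - y) by (apply sqrt_sqrt; lra).
  set (q := sqrt (1 - y)) in *.
  assert (Hq1 : q <= 1) by nra.
  repeat split.
  - apply (Rmult_le_reg_r q); auto. rewrite Rinv_l by lra. nra.
  - apply (Rmult_le_reg_r q); auto. rewrite Rinv_l by lra. nra.
  - apply (Rmult_le_reg_r q); auto. rewrite Rinv_l by lra. nra.
Qed.

Lemma w_ge1 s t : 0 <= s <= 1/2 -> 1 <= w s t.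
Proof. intros H; pose proof (w_bounds s t H); pose proof (sin2_bound t); nra. Qed.

Lemma w_le s t : 0 <= s <= 1/2 -> Rabs (w s t - 1) <= s.
Proof. intros H; pose proof (w_bounds s t H); pose proof (sin2_bound t).
  rewrite Rabs_right; nra. Qed.

Lemma w_le2 s t : 0 <= s <= 1/2 -> w s t <= 2.
Proof. intros H; pose proof (w_bounds s t H); pose proof (sin2_bound t). nra. Qed.

Lemma w_taylor s t : 0 <= s <= 1/2 -> Rabs (w s t - 1 - s * sin t ^ 2 / 2) <= s ^ 2.
Proof. intros H; pose proof (w_bounds s t H); pose proof (sin2_bound t).
  assert (0 <= s * sin t ^ 2 <= s) by nra.
  assert ((s * sin t^2)^2 <= s^2) by nra.
  rewrite Rabs_right; nra. Qed.

Lemma w_lip s s' t : 0 <= s <= 1/2 -> 0 <= s' <= 1/2 ->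
  Rabs (w s t - w s' t) <= 2 * Rabs (s - s').
Proof.
  intros Hs Hs'. pose proof (sin2_bound t) as Hb. unfold w.
  set (a := 1 - s * sin t ^ 2). set (b := 1 - s' * sin t ^ 2).
  assert (Ha : 1/2 <= a) by (unfold a; nra).
  assert (Hb' : 1/2 <= b) by (unfold b; nra).
  assert (Hab : Rabs (a - b) <= Rabs (s - s')).
  { unfold a, b. replace (1 - s * sin t ^ 2 - (1 - s' * sin t ^ 2)) with ((s' - s) * sin t ^ 2) by ring.
    rewrite Rabs_mult, (Rabs_right (sin t ^ 2)) by lra. rewrite (Rabs_minus_sym s' s). pose proof (Rabs_pos (s - s')). nra. }
  pose proof (sqrt_sqrt a ltac:(lra)). pose proof (sqrt_sqrt b ltac:(lra)).
  pose proof (sqrt_pos a). pose proof (sqrt_pos b).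
  set (p := sqrt a) in *. set (q := sqrt b) in *.
  assert (p >= 7/10) by nra. assert (q >= 7/10) by nra.
  replace (/ p - / q) with ((q * q - p * p) / (p * q * (p + q))) by (field; lra).
  replace (q * q - p * p) with (b - a) by lra.
  unfold Rdiv. rewrite Rabs_mult, Rabs_inv, (Rabs_right (p*q*(p+q))) by nra.
  rewrite Rabs_minus_sym.
  apply (Rmult_le_reg_r (p * q * (p + q))). nra.
  rewrite Rmult_assoc, Rinv_l by nra.
  assert (p * q * (p + q) >= 1/2) by nra. pose proof (Rabs_pos (s - s')). nra.
Qed.

Lemma w_cont s t : 0 <= s <= 1/2 -> continuous (w s) t.
Proof.
  intros Hs. apply (ex_derive_continuous (K:=R_AbsRing) (V:=R_NormedModule)). unfold w.
  pose proof (sin2_bound t).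
  auto_derive. split. nra. split; auto.
  apply Rgt_not_eq, Rlt_gt, sqrt_lt_R0. nra.
Qed.

Lemma ex_RInt_w s a b : 0 <= s <= 1/2 -> ex_RInt (w s) a b.
Proof. intros; apply (ex_RInt_continuous (V:=R_CompleteNormedModule)); intros; apply w_cont; auto. Qed.

Definition G (s x : R) : R := RInt (w s) 0 x.

Lemma ellF_G k x : ellF k x = G (k ^ 2) x.
Proof. reflexivity. Qed.

Lemma G_derive s x : 0 <= s <= 1/2 -> is_derive (G s) x (w s x).
Proof.
  intros Hs. unfold G. apply (is_derive_RInt (V:=R_CompleteNormedModule) (w s) (fun x => RInt (w s) 0 x) 0).
  - apply filter_forall. intros y. apply (RInt_correct (V:=R_CompleteNormedModule)), ex_RInt_w; auto.
  - apply w_cont; auto.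
Qed.

Lemma G_cont s : 0 <= s <= 1/2 -> continuity (G s).
Proof.
  intros Hs x. apply continuity_pt_filterlim. apply (ex_derive_continuous (K:=R_AbsRing) (V:=R_NormedModule)).
  eexists; apply G_derive; auto.
Qed.

Lemma G_diff s a b : 0 <= s <= 1/2 -> G s b - G s a = RInt (w s) a b.
Proof.
  intros Hs. unfold G. rewrite <- (RInt_Chasles (w s) 0 a b) by (apply ex_RInt_w; auto).
  unfold plus; simpl. ring.
Qed.

Ltac req := match goal with |- @eq _ ?x ?y => change (@eq R x y) end.

Lemma RInt_minus_R (f g : R -> R) a b : ex_RInt f a b -> ex_RInt g a b ->
  RInt (fun x => f x - g x) a b = RInt f a b - RInt g a b.
Proof. intros; apply (RInt_minus (V:=R_CompleteNormedModule)); auto. Qed.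

Lemma RInt_const_R (a b c : R) : RInt (fun _ : R => c) a b = (b - a) * c.
Proof. exact (RInt_const (V:=R_CompleteNormedModule) a b c). Qed.

Lemma ex_RInt_cont (f : R -> R) a b : (forall t, continuous f t) -> ex_RInt f a b.
Proof. intros; apply (ex_RInt_continuous (V:=R_CompleteNormedModule)); auto. Qed.

Lemma RInt_abs_bound (f : R -> R) a b M : (forall t, continuous f t) ->
  (forall t, Rmin a b <= t <= Rmax a b -> Rabs (f t) <= M) ->
  Rabs (RInt f a b) <= M * Rabs (b - a).
Proof.
  intros Hc Hb. destruct (Rle_dec a b) as [H|H].
  - rewrite (Rabs_right (b - a)) by lra. rewrite Rmult_comm.
    apply abs_RInt_le_const; auto. apply ex_RInt_cont; auto.
    intros t Ht; apply Hb; rewrite Rmin_left, Rmax_right; lra.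
  - rewrite <- (opp_RInt_swap (V:=R_CompleteNormedModule)) by (apply ex_RInt_cont; auto).
    unfold opp; simpl. rewrite Rabs_Ropp, (Rabs_left (b - a)) by lra.
    replace (- (b - a)) with (a - b) by ring. rewrite Rmult_comm.
    apply abs_RInt_le_const; [lra| apply ex_RInt_cont; auto|].
    intros t Ht; apply Hb; rewrite Rmin_right, Rmax_left; lra.
Qed.

Lemma RInt_le_R (f g : R -> R) a b : a <= b -> (forall t, continuous f t) -> (forall t, continuous g t) ->
  (forall t, a <= t <= b -> f t <= g t) -> RInt f a b <= RInt g a b.
Proof.
  intros. apply RInt_le; auto; try (apply ex_RInt_cont; auto).
  intros; apply H2; lra.
Qed.

Lemma cont_const (c t : R) : continuous (fun _ : R => c) t.
Proof. apply continuous_const. Qed.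

Lemma G_mono s a b : 0 <= s <= 1/2 -> a <= b -> b - a <= G s b - G s a <= 2 * (b - a).
Proof.
  intros Hs Hab. rewrite G_diff by auto. split.
  - replace (b - a) with (RInt (fun _ : R => 1) a b) by (rewrite RInt_const_R; apply Rmult_1_r).
    apply RInt_le_R; auto using cont_const. intros; apply w_cont; auto.
    intros; apply w_ge1; auto.
  - replace (2 * (b - a)) with (RInt (fun _ : R => 2) a b) by (rewrite RInt_const_R; apply Rmult_comm).
    apply RInt_le_R; auto using cont_const. intros; apply w_cont; auto.
    intros; apply w_le2; auto.
Qed.

Lemma G_abs_lower s a b : 0 <= s <= 1/2 -> Rabs (a - b) <= Rabs (G s a - G s b).
Proof.
  intros Hs. destruct (Rle_dec a b).
  - pose proof (G_mono s a b Hs r). rewrite !Rabs_left1; lra.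
  - pose proof (G_mono s b a Hs ltac:(lra)). rewrite !Rabs_right; lra.
Qed.

Lemma w_minus_cont s c t : 0 <= s <= 1/2 -> continuous (fun t => w s t - c) t.
Proof. intros. apply (continuous_minus (V:=R_NormedModule)); [apply w_cont; auto| apply continuous_const]. Qed.

Lemma G_near s x : 0 <= s <= 1/2 -> Rabs (G s x - x) <= s * Rabs x.
Proof.
  intros Hs. unfold G.
  replace (RInt (w s) 0 x - x) with (RInt (fun t => w s t - 1) 0 x).
  2:{ rewrite RInt_minus_R, RInt_const_R. req; ring. apply ex_RInt_w; auto. apply ex_RInt_const. }
  replace (Rabs x) with (Rabs (x - 0)) by (f_equal; ring).
  apply RInt_abs_bound. intros; apply w_minus_cont; auto.
  intros; apply w_le; auto.
Qed.

Lemma G_lip s s' x : 0 <= s <= 1/2 -> 0 <= s' <= 1/2 ->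
  Rabs (G s x - G s' x) <= 2 * Rabs (s - s') * Rabs x.
Proof.
  intros Hs Hs'. unfold G. rewrite <- RInt_minus_R by (apply ex_RInt_w; auto).
  replace (Rabs x) with (Rabs (x - 0)) by (f_equal; ring).
  apply RInt_abs_bound.
  intros; apply (continuous_minus (V:=R_NormedModule)); apply w_cont; auto.
  intros; apply w_lip; auto.
Qed.

Lemma RInt_sin2_gen b : RInt (fun t => sin t ^ 2) 0 b = (b - sin b * cos b) / 2.
Proof.
  apply is_RInt_unique.
  assert (H := is_RInt_derive (V:=R_CompleteNormedModule) (fun t => (t - sin t * cos t) / 2)
     (fun t => sin t ^ 2) 0 b).
  replace ((b - sin b * cos b) / 2) with (minus ((fun t => (t - sin t * cos t) / 2) b) ((fun t => (t - sin t * cos t) / 2) 0)).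
  apply H.
  - intros x _. auto_derive; auto. pose proof (sin2 x) as Hs2. unfold Rsqr in Hs2. nra.
  - intros x _. apply (ex_derive_continuous (K:=R_AbsRing) (V:=R_NormedModule)). auto_derive. auto.
  - unfold minus, plus, opp; simpl. rewrite sin_0. lra.
Qed.

Lemma RInt_sin2_half : RInt (fun t => sin t ^ 2) 0 (PI / 2) = PI / 4.
Proof. rewrite RInt_sin2_gen, cos_PI2. req. field. Qed.

Lemma RInt_sin2_2pi : RInt (fun t => sin t ^ 2) 0 (2 * PI) = PI.
Proof. rewrite RInt_sin2_gen, sin_2PI. req. field. Qed.

Lemma K_expand s : 0 <= s <= 1/2 ->
  Rabs (G s (PI / 2) - PI / 2 - s * PI / 8) <= s ^ 2 * (PI / 2).
Proof.
  intros Hs. unfold G.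
  replace (RInt (w s) 0 (PI / 2) - PI / 2 - s * PI / 8)
    with (RInt (fun t => w s t - 1 - s * sin t ^ 2 / 2) 0 (PI / 2)).
  2:{ rewrite RInt_minus_R, RInt_minus_R, RInt_const_R.
      replace (RInt (fun t => s * sin t ^ 2 / 2) 0 (PI / 2)) with (s / 2 * RInt (fun t => sin t ^ 2) 0 (PI / 2)).
      rewrite RInt_sin2_half. req. field.
      rewrite <- (RInt_scal (V:=R_CompleteNormedModule)). apply RInt_ext. intros; unfold scal; simpl; unfold mult; simpl. req. field.
      apply ex_RInt_cont; intros; apply (ex_derive_continuous (K:=R_AbsRing) (V:=R_NormedModule)); auto_derive; auto.
      apply ex_RInt_w; auto. apply ex_RInt_const.
      apply ex_RInt_cont; intros; apply w_minus_cont; auto.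
      apply ex_RInt_cont; intros; apply (ex_derive_continuous (K:=R_AbsRing) (V:=R_NormedModule)); auto_derive; auto. }
  eapply Rle_trans. apply RInt_abs_bound.
  intros; apply (continuous_minus (V:=R_NormedModule)). apply w_minus_cont; auto.
  apply (ex_derive_continuous (K:=R_AbsRing) (V:=R_NormedModule)); auto_derive; auto.
  intros; apply w_taylor; auto.
  rewrite Rminus_0_r, Rabs_right. lra. pose proof PI_RGT_0; lra.
Qed.

Lemma G_0 s : G s 0 = 0.
Proof. unfold G. rewrite RInt_point. reflexivity. Qed.

Lemma G_surj s x : 0 <= s <= 1/2 -> exists p, G s p = x.
Proof.
  intros Hs.
  destruct (IVT_gen (G s) (- Rabs x) (Rabs x) x (G_cont s Hs)) as [p [_ Hp]].
  - pose proof (G_mono s (- Rabs x) 0 Hs ltac:(pose proof (Rabs_pos x); lra)).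
    pose proof (G_mono s 0 (Rabs x) Hs ltac:(pose proof (Rabs_pos x); lra)).
    rewrite G_0 in *.
    assert (- Rabs x <= x <= Rabs x) by (split; [pose proof (Rabs_pos x)|]; unfold Rabs; destruct Rcase_abs; lra).
    split. eapply Rle_trans. apply Rmin_l. lra. eapply Rle_trans. 2: apply Rmax_r. lra.
  - exists p; auto.
Qed.

Lemma jam_spec k x : 0 <= k ^ 2 <= 1/2 -> G (k ^ 2) (jam x k) = x.
Proof.
  intros Hk. unfold jam.
  apply (epsilon_spec (inhabits 0) (fun phi => ellF k phi = x)).
  destruct (G_surj (k^2) x Hk) as [p Hp]. exists p. rewrite ellF_G. auto.
Qed.

Lemma J_lip k x y : 0 <= k ^ 2 <= 1/2 -> Rabs (jam x k - jam y k) <= Rabs (x - y).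
Proof.
  intros Hk. pose proof (G_abs_lower (k^2) (jam x k) (jam y k) Hk).
  rewrite !jam_spec in H by auto. auto.
Qed.

Lemma J_abs k x : 0 <= k ^ 2 <= 1/2 -> Rabs (jam x k) <= Rabs x.
Proof.
  intros Hk. pose proof (G_abs_lower (k^2) (jam x k) 0 Hk).
  rewrite jam_spec, G_0, !Rminus_0_r in H by auto. auto.
Qed.

Lemma J_near k x : 0 <= k ^ 2 <= 1/2 -> Rabs (jam x k - x) <= k ^ 2 * Rabs x.
Proof.
  intros Hk. pose proof (G_near (k^2) (jam x k) Hk). rewrite jam_spec in H by auto.
  pose proof (J_abs k x Hk). rewrite Rabs_minus_sym. nra.
Qed.

Lemma J_lip2 k k' x y : 0 <= k ^ 2 <= 1/2 -> 0 <= k' ^ 2 <= 1/2 ->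
  Rabs (jam x k - jam y k') <= Rabs (x - y) + 2 * Rabs (k ^ 2 - k' ^ 2) * Rabs y.
Proof.
  intros Hk Hk'.
  pose proof (G_abs_lower (k^2) (jam x k) (jam y k') Hk).
  rewrite jam_spec in H by auto.
  pose proof (G_lip (k^2) (k'^2) (jam y k') Hk Hk'). rewrite (jam_spec k' y) in H0 by auto.
  pose proof (J_abs k' y Hk'). pose proof (Rabs_pos (k^2 - k'^2)).
  replace (x - G (k ^ 2) (jam y k')) with ((x - y) - (G (k ^ 2) (jam y k') - y)) in H by ring.
  pose proof (Rabs_triang_inv (x - y) (G (k ^ 2) (jam y k') - y)).
  pose proof (Rabs_triang (x - y) (- (G (k ^ 2) (jam y k') - y))). rewrite Rabs_Ropp in H4.
  unfold Rminus at 2 in H. nra.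
Qed.

Lemma J_derive k x : 0 <= k ^ 2 <= 1/2 ->
  is_derive (fun x => jam x k) x (/ w (k ^ 2) (jam x k)).
Proof.
  intros Hk. apply is_derive_Reals. set (s := k ^ 2) in *.
  set (p := jam x k). set (g := w s p).
  assert (Hg : 1 <= g) by (apply w_ge1; auto).
  assert (HG : derivable_pt_lim (G s) p g) by (apply is_derive_Reals, G_derive; auto).
  intros eps Heps. destruct (HG eps Heps) as [del Hdel].
  exists del. intros h Hh0 Hh.
  set (d := jam (x + h) k - p).
  assert (Hd : Rabs d <= Rabs h).
  { unfold d, p. replace h with (x + h - x) at 2 by ring. apply J_lip; auto. }
  assert (HGd : G s (p + d) - G s p = h).
  { unfold d, p. replace (jam x k + (jam (x + h) k - jam x k)) with (jam (x + h) k) by ring.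
    unfold s; rewrite !jam_spec by auto. ring. }
  assert (Hd0 : d <> 0).
  { intro E. rewrite E, Rplus_0_r in HGd. lra. }
  specialize (Hdel d Hd0 ltac:(lra)). rewrite HGd in Hdel.
  replace ((jam (x + h) k - jam x k) / h - / g) with ((d / h) * / g * (g - h / d)).
  2:{ fold p. fold d. field. repeat split; auto; lra. }
  rewrite !Rabs_mult. rewrite (Rabs_minus_sym g).
  assert (Rabs (d / h) <= 1).
  { unfold Rdiv. rewrite Rabs_mult, Rabs_inv. apply (Rmult_le_reg_r (Rabs h)).
    apply Rabs_pos_lt; auto. rewrite Rmult_assoc, Rinv_l, Rmult_1_r. lra.
    apply Rabs_no_R0; auto. }
  assert (Rabs (/ g) <= 1).
  { rewrite Rabs_inv, Rabs_right by lra. rewrite <- Rinv_1. apply Rinv_le_contravar; lra. }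
  pose proof (Rabs_pos (d/h)). pose proof (Rabs_pos (/g)). pose proof (Rabs_pos (h/d - g)).
  assert (Rabs (d/h) * Rabs (/g) <= 1) by nra.
  match goal with |- ?A * ?B * ?C < _ => assert (A * B * C <= C) by nra end.
  lra.
Qed.

Lemma sin_lip a b : Rabs (sin a - sin b) <= Rabs (a - b).
Proof.
  destruct (MVT_abs sin cos b a) as [c [Hc _]].
  intros; apply derivable_pt_lim_sin.
  rewrite Hc. pose proof (COS_bound c). pose proof (Rabs_pos (a - b)).
  assert (Rabs (cos c) <= 1) by (unfold Rabs; destruct Rcase_abs; lra). nra.
Qed.

Lemma cos_lip a b : Rabs (cos a - cos b) <= Rabs (a - b).
Proof.
  destruct (MVT_abs cos (fun x => - sin x) b a) as [c [Hc _]].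
  intros; apply derivable_pt_lim_cos.
  rewrite Hc. pose proof (SIN_bound c). pose proof (Rabs_pos (a - b)).
  assert (Rabs (- sin c) <= 1) by (rewrite Rabs_Ropp; unfold Rabs; destruct Rcase_abs; lra). nra.
Qed.

Lemma abs_sin_le1 x : Rabs (sin x) <= 1.
Proof. pose proof (SIN_bound x). unfold Rabs; destruct Rcase_abs; lra. Qed.
Lemma abs_cos_le1 x : Rabs (cos x) <= 1.
Proof. pose proof (COS_bound x). unfold Rabs; destruct Rcase_abs; lra. Qed.

Definition e0 : R := / 40.
Definition Sp (e : R) : R := e ^ 2 / (2 - e ^ 2).
Definition kk (e : R) : R := sqrt (Sp e).
Definition KK (e : R) : R := G (Sp e) (PI / 2).
Definition cc (e : R) : R := 2 * KK e / PI.
Definition ph (e z : R) : R := jam (cc e * z) (kk e).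
Definition qq (e z : R) : R := sqrt (1 - Sp e * sin (ph e z) ^ 2).
Definition Iq (e : R) : R := / PI * RInt (fun z => sin (ph e z) * sin z) 0 (2 * PI).

Definition Hyp (e : R) : Prop := 0 < e <= e0.

Lemma Hyp_e e : Hyp e -> 0 < e <= /40.
Proof. auto. Qed.

Lemma S_bounds e : Hyp e -> e ^ 2 / 2 <= Sp e <= e ^ 2 /\ Sp e <= / 1600.
Proof.
  intros H. apply Hyp_e in H. unfold Sp.
  assert (0 < e ^ 2 <= /1600) by (split; nra).
  assert (0 < 2 - e ^ 2) by lra.
  split; [split|].
  - apply (Rmult_le_reg_r (2 - e^2)); auto. field_simplify; nra.
  - apply (Rmult_le_reg_r (2 - e^2)); auto. field_simplify; nra.
  - apply (Rmult_le_reg_r (2 - e^2)); auto. field_simplify; nra.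
Qed.

Lemma S_nonneg e : Hyp e -> 0 <= Sp e <= 1/2.
Proof. intros H. pose proof (S_bounds e H). pose proof (Hyp_e e H). nra. Qed.

Lemma kk2 e : Hyp e -> kk e ^ 2 = Sp e.
Proof. intros H. unfold kk. apply pow2_sqrt. apply S_nonneg; auto. Qed.

Lemma kk2b e : Hyp e -> 0 <= kk e ^ 2 <= 1/2.
Proof. intros H. rewrite kk2; auto. apply S_nonneg; auto. Qed.

Lemma PI_bounds : 3 < PI <= 4.
Proof. pose proof PI2_3_2. pose proof PI_4. lra. Qed.

Lemma KK_bounds e : Hyp e -> Rabs (KK e - PI / 2) <= Sp e * (PI / 2) /\ PI / 2 <= KK e.
Proof.
  intros H. pose proof (S_nonneg e H). pose proof PI_bounds. split.
  - unfold KK. eapply Rle_trans. apply G_near; auto. rewrite Rabs_right; lra.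
  - pose proof (G_mono (Sp e) 0 (PI/2) H0 ltac:(lra)). rewrite G_0 in H2. unfold KK. lra.
Qed.

Lemma cc_bounds e : Hyp e -> Rabs (cc e - 1) <= Sp e /\ 1 <= cc e <= 3/2.
Proof.
  intros H. destruct (KK_bounds e H) as [H1 H2]. pose proof PI_bounds.
  pose proof (S_bounds e H).
  assert (E : cc e - 1 = (KK e - PI/2) * (2 / PI)) by (unfold cc; field; lra).
  assert (Hc : Rabs (cc e - 1) <= Sp e).
  { rewrite E, Rabs_mult, (Rabs_right (2/PI)).
    apply (Rmult_le_reg_r (PI/2)). lra.
    replace (Rabs (KK e - PI / 2) * (2 / PI) * (PI / 2)) with (Rabs (KK e - PI / 2)) by (field; lra). auto.
    apply Rle_ge, Rlt_le. unfold Rdiv. apply Rmult_lt_0_compat; [lra| apply Rinv_0_lt_compat; lra]. }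
  split; auto. split.
  - unfold cc. apply (Rmult_le_reg_r PI). lra. field_simplify; lra.
  - pose proof (S_nonneg e H). revert Hc. unfold Rabs; destruct Rcase_abs; intros; lra.
Qed.

Lemma ph_near e z : Hyp e -> 0 <= z <= 2 * PI -> Rabs (ph e z - z) <= 20 * Sp e.
Proof.
  intros H Hz. pose proof PI_bounds. destruct (cc_bounds e H) as [Hc1 Hc2].
  pose proof (S_nonneg e H).
  pose proof (J_near (kk e) (cc e * z) (kk2b e H)) as HJ. rewrite kk2 in HJ by auto.
  unfold ph.
  replace (jam (cc e * z) (kk e) - z) with ((jam (cc e * z) (kk e) - cc e * z) + (cc e - 1) * z) by ring.
  eapply Rle_trans. apply Rabs_triang. rewrite Rabs_mult, (Rabs_right z) by lra.
  rewrite (Rabs_right (cc e * z)) in HJ by nra.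
  assert (cc e * z <= 3/2 * (2 * PI)) by nra.
  assert (Rabs (cc e - 1) * z <= Sp e * (2 * PI)) by (pose proof (Rabs_pos (cc e - 1)); nra).
  nra.
Qed.

Lemma J_ex k y : 0 <= k ^ 2 <= 1/2 -> ex_derive (fun x => jam x k) y.
Proof. intros; eexists; apply J_derive; auto. Qed.

Lemma J_Derive k y : 0 <= k ^ 2 <= 1/2 ->
  Derive (fun x => jam x k) y = sqrt (1 - k ^ 2 * sin (jam y k) ^ 2).
Proof.
  intros Hk. erewrite is_derive_unique; [|apply J_derive; auto]. unfold w.
  rewrite Rinv_inv. auto.
Qed.

Lemma ph_derive e z : Hyp e -> is_derive (ph e) z (cc e * qq e z).
Proof.
  intros H. unfold ph, qq, ph. auto_derive. apply J_ex, kk2b; auto.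
  rewrite J_Derive by (apply kk2b; auto). rewrite kk2 by auto. ring.
Qed.

Lemma ph_ex e z : Hyp e -> ex_derive (ph e) z.
Proof. intros; eexists; apply ph_derive; auto. Qed.

Lemma ph_Derive e z : Hyp e -> Derive (ph e) z = cc e * qq e z.
Proof. intros; apply is_derive_unique, ph_derive; auto. Qed.

Lemma qq_pos e z : Hyp e -> 0 < 1 - Sp e * sin (ph e z) ^ 2.
Proof. intros H. pose proof (S_nonneg e H). pose proof (sin2_bound (ph e z)). nra. Qed.

Lemma qq_derive e z : Hyp e ->
  is_derive (qq e) z (- cc e * Sp e * sin (ph e z) * cos (ph e z)).
Proof.
  intros H. pose proof (qq_pos e z H).
  assert (Hq : 0 < qq e z) by (apply sqrt_lt_R0; auto).
  unfold qq. auto_derive. split. apply ph_ex; auto. auto.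
  rewrite ph_Derive by auto. replace (sqrt (1 + - (Sp e * (sin (ph e z) * (sin (ph e z) * 1))))) with (qq e z).
  field. lra. unfold qq. f_equal.
Qed.

Lemma ex_derive_cont (f : R -> R) x : ex_derive f x -> continuous f x.
Proof. apply (ex_derive_continuous (K:=R_AbsRing) (V:=R_NormedModule)). Qed.

Lemma qq_bounds e z : Hyp e -> Rabs (qq e z - 1) <= Sp e /\ 0 < qq e z <= 1.
Proof.
  intros H. pose proof (qq_pos e z H). pose proof (S_nonneg e H). pose proof (sin2_bound (ph e z)).
  assert (Hq : 0 < qq e z) by (apply sqrt_lt_R0; auto).
  assert (Hq2 : qq e z * qq e z = 1 - Sp e * sin (ph e z) ^ 2) by (apply sqrt_sqrt; lra).
  assert (qq e z <= 1) by nra.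
  split; [|split]; auto.
  rewrite Rabs_left1 by lra. nra.
Qed.

Lemma Iq_near e : Hyp e -> Rabs (Iq e - 1) <= 40 * Sp e.
Proof.
  intros H. pose proof PI_bounds. pose proof (S_nonneg e H).
  assert (Hc : forall t, continuous (fun z => (sin (ph e z) - sin z) * sin z) t).
  { intros; apply ex_derive_cont; auto_derive; apply ph_ex; auto. }
  unfold Iq.
  replace (/ PI * RInt (fun z => sin (ph e z) * sin z) 0 (2 * PI) - 1)
    with (/ PI * RInt (fun z => (sin (ph e z) - sin z) * sin z) 0 (2 * PI)).
  2:{ rewrite <- (RInt_ext (fun z => sin (ph e z) * sin z - sin z ^ 2)).
      rewrite RInt_minus_R, RInt_sin2_2pi. req. field. lra.
      apply ex_RInt_cont; intros; apply ex_derive_cont; auto_derive; apply ph_ex; auto.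
      apply ex_RInt_cont; intros; apply ex_derive_cont; auto_derive; auto.
      intros; req; ring. }
  rewrite Rabs_mult, Rabs_inv, (Rabs_right PI) by lra.
  assert (HR : Rabs (RInt (fun z => (sin (ph e z) - sin z) * sin z) 0 (2 * PI)) <= 20 * Sp e * Rabs (2 * PI - 0)).
  { apply RInt_abs_bound; auto. intros t Ht.
    rewrite Rmin_left, Rmax_right in Ht by lra.
    rewrite Rabs_mult. pose proof (abs_sin_le1 t). pose proof (sin_lip (ph e t) t).
    pose proof (ph_near e t H Ht). pose proof (Rabs_pos (sin (ph e t) - sin t)). pose proof (Rabs_pos (sin t)).
    assert (Rabs (sin (ph e t) - sin t) <= 20 * Sp e) by lra.
    nra. }
  rewrite Rminus_0_r, (Rabs_right (2 * PI)) in HR by lra.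
  apply (Rmult_le_reg_l PI). lra. rewrite <- Rmult_assoc, Rinv_r, Rmult_1_l by lra. nra.
Qed.

Lemma S_lip e1 e2 : Hyp e1 -> Hyp e2 -> Rabs (Sp e1 - Sp e2) <= 2 * Rabs (e1 ^ 2 - e2 ^ 2).
Proof.
  intros H1 H2. apply Hyp_e in H1. apply Hyp_e in H2. unfold Sp.
  assert (0 < e1^2 <= /1600) by (split; nra). assert (0 < e2^2 <= /1600) by (split; nra).
  replace (e1 ^ 2 / (2 - e1 ^ 2) - e2 ^ 2 / (2 - e2 ^ 2)) with
    ((e1 ^ 2 - e2 ^ 2) * (2 / ((2 - e1 ^ 2) * (2 - e2 ^ 2)))) by (field; lra).
  rewrite Rabs_mult. rewrite (Rabs_right (2 / _)).
  2:{ apply Rle_ge, Rlt_le. unfold Rdiv. apply Rmult_lt_0_compat. lra. apply Rinv_0_lt_compat. nra. }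
  pose proof (Rabs_pos (e1^2 - e2^2)).
  assert (2 / ((2 - e1 ^ 2) * (2 - e2 ^ 2)) <= 2).
  { apply (Rmult_le_reg_r ((2 - e1 ^ 2) * (2 - e2 ^ 2))). nra. field_simplify; nra. }
  nra.
Qed.

Lemma cc_lip e1 e2 : Hyp e1 -> Hyp e2 -> Rabs (cc e1 - cc e2) <= 2 * Rabs (Sp e1 - Sp e2).
Proof.
  intros H1 H2. pose proof PI_bounds.
  pose proof (G_lip (Sp e1) (Sp e2) (PI/2) (S_nonneg e1 H1) (S_nonneg e2 H2)).
  unfold cc, KK.
  replace (2 * G (Sp e1) (PI / 2) / PI - 2 * G (Sp e2) (PI / 2) / PI) with
    ((G (Sp e1) (PI / 2) - G (Sp e2) (PI / 2)) * (2 / PI)) by (field; lra).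
  rewrite Rabs_mult, (Rabs_right (2 / PI)), (Rabs_right (PI/2)) in * by (try apply Rle_ge, Rlt_le; try (unfold Rdiv; apply Rmult_lt_0_compat; [lra| apply Rinv_0_lt_compat; lra]); lra).
  apply (Rmult_le_reg_r (PI/2)). lra.
  replace (Rabs (G (Sp e1) (PI / 2) - G (Sp e2) (PI / 2)) * (2 / PI) * (PI / 2)) with
     (Rabs (G (Sp e1) (PI / 2) - G (Sp e2) (PI / 2))) by (field; lra).
  lra.
Qed.

Lemma ph_lip e1 e2 z : Hyp e1 -> Hyp e2 -> 0 <= z <= 2 * PI ->
  Rabs (ph e1 z - ph e2 z) <= 40 * Rabs (Sp e1 - Sp e2).
Proof.
  intros H1 H2 Hz. pose proof PI_bounds.
  pose proof (J_lip2 (kk e1) (kk e2) (cc e1 * z) (cc e2 * z) (kk2b e1 H1) (kk2b e2 H2)) as HJ.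
  rewrite !kk2 in HJ by auto. unfold ph.
  pose proof (cc_lip e1 e2 H1 H2). destruct (cc_bounds e2 H2) as [_ Hc2].
  replace (cc e1 * z - cc e2 * z) with ((cc e1 - cc e2) * z) in HJ by ring.
  rewrite Rabs_mult, (Rabs_right z), (Rabs_right (cc e2 * z)) in HJ by nra.
  pose proof (Rabs_pos (Sp e1 - Sp e2)). pose proof (Rabs_pos (cc e1 - cc e2)).
  assert (Rabs (cc e1 - cc e2) * z <= 2 * Rabs (Sp e1 - Sp e2) * (2 * PI)) by nra.
  assert (cc e2 * z <= 3/2 * (2 * PI)) by nra.
  assert (2 * Rabs (Sp e1 - Sp e2) * (cc e2 * z) <= 2 * Rabs (Sp e1 - Sp e2) * (3/2 * (2 * PI))) by nra.
  nra.
Qed.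

Lemma Iq_lip e1 e2 : Hyp e1 -> Hyp e2 -> Rabs (Iq e1 - Iq e2) <= 80 * Rabs (Sp e1 - Sp e2).
Proof.
  intros H1 H2. pose proof PI_bounds. unfold Iq.
  rewrite <- Rmult_minus_distr_l, <- RInt_minus_R.
  2,3: apply ex_RInt_cont; intros; apply ex_derive_cont; auto_derive; apply ph_ex; auto.
  rewrite Rabs_mult, Rabs_inv, (Rabs_right PI) by lra.
  assert (HR : Rabs (RInt (fun x => sin (ph e1 x) * sin x - sin (ph e2 x) * sin x) 0 (2 * PI))
     <= 40 * Rabs (Sp e1 - Sp e2) * Rabs (2 * PI - 0)).
  { apply RInt_abs_bound.
    intros; apply ex_derive_cont; auto_derive. repeat split; apply ph_ex; auto.
    intros u Ht. rewrite Rmin_left, Rmax_right in Ht by lra.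
    replace (sin (ph e1 u) * sin u - sin (ph e2 u) * sin u) with ((sin (ph e1 u) - sin (ph e2 u)) * sin u) by ring.
    rewrite Rabs_mult. pose proof (abs_sin_le1 u). pose proof (sin_lip (ph e1 u) (ph e2 u)).
    pose proof (ph_lip e1 e2 u H1 H2 Ht). pose proof (Rabs_pos (sin (ph e1 u) - sin (ph e2 u))). pose proof (Rabs_pos (sin u)).
    assert (Rabs (sin (ph e1 u) - sin (ph e2 u)) <= 40 * Rabs (Sp e1 - Sp e2)) by lra.
    nra. }
  rewrite Rminus_0_r, (Rabs_right (2 * PI)) in HR by lra.
  apply (Rmult_le_reg_l PI). lra. rewrite <- Rmult_assoc, Rinv_r, Rmult_1_l by lra. nra.
Qed.

Lemma kmod_eq e : kmod (1 - e ^ 2) = kk e.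
Proof.
  unfold kmod, kk, Sp. replace (1 + (1 - e ^ 2)) with (2 - e ^ 2) by ring.
  replace (1 - (1 - e ^ 2)) with (e ^ 2) by ring. reflexivity.
Qed.

Lemma ellK_eq e : Hyp e -> ellK (kk e) = KK e.
Proof. intros H. unfold ellK, KK. rewrite ellF_G, kk2; auto. Qed.

Lemma T0_eq e : Hyp e -> T0 (1 - e ^ 2) = 2 * sqrt (2 / (2 - e ^ 2)) * KK e.
Proof.
  intros H. unfold T0. rewrite kmod_eq, ellK_eq by auto.
  replace (1 + (1 - e ^ 2)) with (2 - e ^ 2) by ring. reflexivity.
Qed.

Lemma U_eq e z : Hyp e -> U (1 - e ^ 2) z = e * sin (ph e z).
Proof.
  intros H. pose proof (Hyp_e e H). pose proof PI_bounds. destruct (KK_bounds e H) as [_ HK].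
  assert (He2 : 0 < e ^ 2 <= /1600) by (split; nra).
  unfold U, u0, jsn. rewrite kmod_eq.
  replace (1 - (1 - e ^ 2)) with (e ^ 2) by ring. rewrite sqrt_pow2 by lra.
  f_equal. unfold ph. f_equal.
  unfold ell. rewrite T0_eq by auto.
  replace (1 + (1 - e ^ 2)) with (2 - e ^ 2) by ring.
  assert (Hs : sqrt (2 / (2 - e ^ 2)) * sqrt ((2 - e ^ 2) / 2) = 1).
  { rewrite <- sqrt_mult. replace (2 / (2 - e ^ 2) * ((2 - e ^ 2) / 2)) with 1 by (field; lra).
    apply sqrt_1. apply Rlt_le; unfold Rdiv; apply Rmult_lt_0_compat; [lra|apply Rinv_0_lt_compat; lra].
    apply Rlt_le; unfold Rdiv; apply Rmult_lt_0_compat; [lra|apply Rinv_0_lt_compat; lra]. }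
  unfold cc.
  assert (0 < sqrt (2 / (2 - e ^ 2))).
  { apply sqrt_lt_R0. unfold Rdiv; apply Rmult_lt_0_compat; [lra|apply Rinv_0_lt_compat; lra]. }
  replace (z / (PI / (2 * sqrt (2 / (2 - e ^ 2)) * KK e)) * sqrt ((2 - e ^ 2) / 2))
    with (z * (2 * KK e / PI) * (sqrt (2 / (2 - e ^ 2)) * sqrt ((2 - e ^ 2) / 2))).
  rewrite Hs. f_equal. ring.
  field. repeat split; lra.
Qed.

Lemma acoef_eq e : Hyp e -> acoef (1 - e ^ 2) = e * Iq e.
Proof.
  intros H. unfold acoef, Iq.
  rewrite (RInt_ext _ (fun z => e * (sin (ph e z) * sin z))).
  2:{ intros; rewrite U_eq by auto. req; ring. }
  rewrite (RInt_scal (V:=R_CompleteNormedModule) (fun z => sin (ph e z) * sin z)).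
  unfold scal; simpl; unfold mult; simpl. ring.
  apply ex_RInt_cont; intros; apply ex_derive_cont; auto_derive; repeat split; apply ph_ex; auto.
Qed.

Lemma ell2_eq e : Hyp e -> ell (1 - e ^ 2) ^ 2 = (1 - e ^ 2 / 2) / (2 * KK e / PI) ^ 2.
Proof.
  intros H. pose proof (Hyp_e e H). pose proof PI_bounds. destruct (KK_bounds e H) as [_ HK].
  assert (He2 : 0 < e ^ 2 <= /1600) by (split; nra).
  unfold ell. rewrite T0_eq by auto.
  assert (Hq : sqrt (2 / (2 - e ^ 2)) ^ 2 = 2 / (2 - e ^ 2)).
  { apply pow2_sqrt. apply Rlt_le; unfold Rdiv; apply Rmult_lt_0_compat; [lra|apply Rinv_0_lt_compat; lra]. }
  assert (0 < sqrt (2 / (2 - e ^ 2))).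
  { apply sqrt_lt_R0. unfold Rdiv; apply Rmult_lt_0_compat; [lra|apply Rinv_0_lt_compat; lra]. }
  replace ((PI / (2 * sqrt (2 / (2 - e ^ 2)) * KK e)) ^ 2)
    with (PI ^ 2 / (4 * sqrt (2 / (2 - e ^ 2)) ^ 2 * KK e ^ 2)) by (field; lra).
  rewrite Hq. field. repeat split; lra.
Qed.

Definition aa (e : R) : R := e * Iq e.

Lemma aa_near e : Hyp e -> Rabs (aa e - e) <= 40 * e ^ 3 /\ e / 2 <= aa e <= 2 * e.
Proof.
  intros H. pose proof (Iq_near e H). pose proof (S_bounds e H). pose proof (Hyp_e e H).
  unfold aa.
  replace (e * Iq e - e) with (e * (Iq e - 1)) by ring.
  rewrite Rabs_mult, (Rabs_right e) by lra.
  assert (Rabs (Iq e - 1) <= 40 * e ^ 2) by lra.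
  assert (e ^ 2 <= / 1600) by nra.
  assert (- (40 * e^2) <= Iq e - 1 <= 40 * e^2) by (revert H3; unfold Rabs; destruct Rcase_abs; intros; lra).
  split. nra. split; nra.
Qed.

Lemma aa_sq e : Hyp e -> Rabs (aa e ^ 2 - e ^ 2) <= 120 * e ^ 4.
Proof.
  intros H. destruct (aa_near e H) as [H1 H2]. pose proof (Hyp_e e H).
  replace (aa e ^ 2 - e ^ 2) with ((aa e - e) * (aa e + e)) by ring.
  rewrite Rabs_mult, (Rabs_right (aa e + e)) by lra.
  pose proof (Rabs_pos (aa e - e)).
  assert (Rabs (aa e - e) * (aa e + e) <= 40 * e ^ 3 * (3 * e)) by nra. nra.
Qed.

Lemma e4_le e : Hyp e -> e ^ 4 <= 16 * aa e ^ 4.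
Proof.
  intros H. destruct (aa_near e H) as [_ H2]. pose proof (Hyp_e e H).
  assert (e <= 2 * aa e) by lra.
  assert (0 <= aa e) by lra.
  replace (16 * aa e ^ 4) with ((2 * aa e) ^ 4) by ring.
  apply pow_incr. lra.
Qed.

Lemma E_expand e : Hyp e -> Rabs ((1 - e ^ 2) - (1 - aa e ^ 2)) <= 1920 * aa e ^ 4.
Proof.
  intros H. replace ((1 - e ^ 2) - (1 - aa e ^ 2)) with (aa e ^ 2 - e ^ 2) by ring.
  pose proof (aa_sq e H). pose proof (e4_le e H). lra.
Qed.

Lemma r_bound e : Hyp e -> Rabs (cc e - 1 - Sp e / 4) <= Sp e ^ 2.
Proof.
  intros H. pose proof PI_bounds. pose proof (K_expand (Sp e) (S_nonneg e H)) as HK.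
  fold (KK e) in HK.
  replace (cc e - 1 - Sp e / 4) with ((KK e - PI / 2 - Sp e * PI / 8) * (2 / PI)) by (unfold cc; field; lra).
  rewrite Rabs_mult, (Rabs_right (2 / PI)).
  2:{ apply Rle_ge, Rlt_le; unfold Rdiv; apply Rmult_lt_0_compat; [lra|apply Rinv_0_lt_compat; lra]. }
  apply (Rmult_le_reg_r (PI / 2)). lra.
  replace (Rabs (KK e - PI / 2 - Sp e * PI / 8) * (2 / PI) * (PI / 2)) with (Rabs (KK e - PI / 2 - Sp e * PI / 8)) by (field; lra).
  lra.
Qed.

Lemma ell_expand0 e : Hyp e ->
  Rabs (ell (1 - e ^ 2) ^ 2 - (1 - 3 / 4 * e ^ 2)) <= 8 * e ^ 4.
Proof.
  intros H. rewrite ell2_eq by auto. fold (cc e).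
  pose proof (r_bound e H) as Hr. pose proof (S_bounds e H) as HS. destruct (cc_bounds e H) as [Hc1 Hc2].
  pose proof (Hyp_e e H).
  set (x := e ^ 2) in *. replace (e ^ 4) with (x ^ 2) by (unfold x; ring).
  assert (Hx : 0 < x <= / 1600) by (unfold x; split; nra).
  assert (HSx : 0 <= Sp e - x / 2 <= x ^ 2).
  { unfold Sp. fold x. split.
    - cut (x / 2 <= x / (2 - x)). lra. apply (Rmult_le_reg_r (2 - x)). lra. field_simplify; nra.
    - apply (Rmult_le_reg_r (2 - x)). lra.
      replace ((x / (2 - x) - x / 2) * (2 - x)) with (x ^ 2 / 2) by (field; lra). nra. }
  replace (cc e) with (1 + (cc e - 1)) by ring.
  set (r := cc e - 1) in *. set (s := Sp e) in *.
  assert (Hr' : - s ^ 2 <= r - s / 4 <= s ^ 2) by (revert Hr; unfold Rabs; destruct Rcase_abs; intros; lra).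
  assert (Hss : s ^ 2 <= x ^ 2) by nra.
  assert (Hr2 : Rabs (x / 4 - 2 * r) <= 4 * x ^ 2) by (apply Rabs_le; split; nra).
  assert (Hr0 : 0 <= r <= x) by (revert Hc1; unfold r, Rabs; destruct Rcase_abs; intros; lra).
  set (num := (1 - x / 2) - (1 - 3 / 4 * x) * (1 + r) ^ 2).
  assert (Hnum : Rabs num <= 8 * x ^ 2).
  { replace num with ((x / 4 - 2 * r) - r ^ 2 + (3 * x / 4) * (2 * r + r ^ 2)) by (unfold num; field).
    eapply Rle_trans. apply Rabs_triang. eapply Rle_trans. apply Rplus_le_compat_r, Rabs_triang.
    rewrite Rabs_Ropp, (Rabs_right (r^2)), (Rabs_right (3 * x / 4 * (2 * r + r ^ 2))) by nra.
    assert (r ^ 2 <= x ^ 2) by nra.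
    assert (3 * x / 4 * (2 * r + r ^ 2) <= 9 / 4 * x ^ 2) by nra.
    lra. }
  replace ((1 - x / 2) / (1 + r) ^ 2 - (1 - 3 / 4 * x)) with (num / (1 + r) ^ 2) by (unfold num; field; lra).
  unfold Rdiv. rewrite Rabs_mult, Rabs_inv, (Rabs_right ((1 + r) ^ 2)) by nra.
  assert (1 <= (1 + r) ^ 2) by nra.
  assert (/ (1 + r) ^ 2 <= 1) by (rewrite <- Rinv_1; apply Rinv_le_contravar; lra).
  assert (0 < / (1 + r) ^ 2) by (apply Rinv_0_lt_compat; lra).
  pose proof (Rabs_pos num). nra.
Qed.

Lemma ell_expand e : Hyp e ->
  Rabs (ell (1 - e ^ 2) ^ 2 - (1 - 3 / 4 * aa e ^ 2)) <= 1600 * aa e ^ 4.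
Proof.
  intros H. pose proof (ell_expand0 e H). pose proof (aa_sq e H). pose proof (e4_le e H).
  replace (ell (1 - e ^ 2) ^ 2 - (1 - 3 / 4 * aa e ^ 2)) with
    ((ell (1 - e ^ 2) ^ 2 - (1 - 3 / 4 * e ^ 2)) + 3 / 4 * (aa e ^ 2 - e ^ 2)) by ring.
  eapply Rle_trans. apply Rabs_triang. rewrite Rabs_mult, (Rabs_right (3/4)) by lra.
  assert (0 <= aa e ^ 4) by (apply pow_le; destruct (aa_near e H) as [_ ?]; pose proof (Hyp_e e H); lra). lra.
Qed.

Lemma Iq_lip2 e1 e2 : Hyp e1 -> Hyp e2 -> Rabs (Iq e2 - Iq e1) <= 8 * Rabs (e2 - e1).
Proof.
  intros H1 H2. pose proof (Iq_lip e2 e1 H2 H1). pose proof (S_lip e2 e1 H2 H1).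
  pose proof (Hyp_e e1 H1). pose proof (Hyp_e e2 H2).
  replace (e2 ^ 2 - e1 ^ 2) with ((e2 - e1) * (e2 + e1)) in H0 by ring.
  rewrite Rabs_mult, (Rabs_right (e2 + e1)) in H0 by lra.
  pose proof (Rabs_pos (e2 - e1)).
  assert (Rabs (e2 - e1) * (e2 + e1) <= Rabs (e2 - e1) * (2 / 40)) by nra.
  lra.
Qed.

Lemma Iq_range e : Hyp e -> 39/40 <= Iq e <= 41/40.
Proof.
  intros H. pose proof (Iq_near e H). pose proof (S_bounds e H).
  assert (40 * Sp e <= 1/40) by lra.
  revert H0; unfold Rabs; destruct Rcase_abs; intros; lra.
Qed.

Lemma aa_diff e1 e2 : aa e2 - aa e1 = (e2 - e1) * Iq e2 + e1 * (Iq e2 - Iq e1).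
Proof. unfold aa; ring. Qed.

Lemma aa_mono e1 e2 : Hyp e1 -> Hyp e2 -> e1 < e2 -> aa e1 < aa e2.
Proof.
  intros H1 H2 Hlt. pose proof (Iq_lip2 e1 e2 H1 H2). pose proof (Iq_range e2 H2).
  pose proof (Hyp_e e1 H1).
  rewrite (Rabs_right (e2 - e1)) in H by lra.
  assert (- (8 * (e2 - e1)) <= Iq e2 - Iq e1) by (revert H; unfold Rabs; destruct Rcase_abs; intros; lra).
  pose proof (aa_diff e1 e2).
  assert (e1 * (Iq e2 - Iq e1) >= - (e1 * (8 * (e2 - e1)))) by nra.
  assert (e1 * (8 * (e2 - e1)) <= (1/40) * 8 * (e2 - e1)) by nra.
  nra.
Qed.

Lemma aa_lip e1 e2 : Hyp e1 -> Hyp e2 -> Rabs (aa e2 - aa e1) <= 2 * Rabs (e2 - e1).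
Proof.
  intros H1 H2. pose proof (Iq_lip2 e1 e2 H1 H2). pose proof (Iq_range e2 H2).
  pose proof (Hyp_e e1 H1). rewrite aa_diff.
  eapply Rle_trans. apply Rabs_triang. rewrite !Rabs_mult, (Rabs_right (Iq e2)), (Rabs_right e1) by lra.
  pose proof (Rabs_pos (e2 - e1)). pose proof (Rabs_pos (Iq e2 - Iq e1)).
  assert (e1 * Rabs (Iq e2 - Iq e1) <= 1/40 * (8 * Rabs (e2 - e1))) by nra.
  nra.
Qed.

Section Bounds.
Variables (e a p z c q s : R).
Hypotheses (He : 0 < e) (Hp : Rabs (p - z) <= 20 * s) (Ha : Rabs (a - e) <= 40 * e * s)
  (Hc : Rabs (c - 1) <= s) (Hq : Rabs (q - 1) <= s) (Hq1 : 0 <= q <= 1) (Hc1 : 1 <= c <= 3/2)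
  (Hs : 0 <= s <= 1/1600).

Lemma pb_p1 : Rabs (c * q - 1) <= 2 * s.
Proof.
  replace (c * q - 1) with ((c - 1) * q + (q - 1)) by ring.
  eapply Rle_trans. apply Rabs_triang. rewrite Rabs_mult, (Rabs_right q) by lra.
  pose proof (Rabs_pos (c - 1)). nra.
Qed.

Lemma pb_f : Rabs (e * sin p - a * sin z) <= 70 * e * s.
Proof.
  replace (e * sin p - a * sin z) with (e * (sin p - sin z) - (a - e) * sin z) by ring.
  eapply Rle_trans. apply Rabs_triang. rewrite Rabs_Ropp, !Rabs_mult, (Rabs_right e) by lra.
  pose proof (sin_lip p z). pose proof (abs_sin_le1 z). pose proof (Rabs_pos (a - e)).
  assert (e * Rabs (sin p - sin z) <= e * (20 * s)) by (apply Rmult_le_compat_l; lra).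
  assert (Rabs (a - e) * Rabs (sin z) <= 40 * e * s) by nra.
  lra.
Qed.

Lemma pb_f1 : Rabs (e * cos p * (c * q) - a * cos z) <= 70 * e * s.
Proof.
  pose proof pb_p1.
  replace (e * cos p * (c * q) - a * cos z) with
    (e * cos p * (c * q - 1) + e * (cos p - cos z) - (a - e) * cos z) by ring.
  eapply Rle_trans. apply Rabs_triang. rewrite Rabs_Ropp.
  eapply Rle_trans. apply Rplus_le_compat_r, Rabs_triang.
  rewrite !Rabs_mult, (Rabs_right e) by lra.
  pose proof (cos_lip p z). pose proof (abs_cos_le1 z). pose proof (abs_cos_le1 p). pose proof (Rabs_pos (a - e)).
  pose proof (Rabs_pos (cos p)). pose proof (Rabs_pos (c * q - 1)).
  assert (e * Rabs (cos p) * Rabs (c * q - 1) <= e * (2 * s)).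
  { rewrite Rmult_assoc. apply Rmult_le_compat_l. lra. nra. }
  assert (e * Rabs (cos p - cos z) <= e * (20 * s)) by (apply Rmult_le_compat_l; lra).
  assert (Rabs (a - e) * Rabs (cos z) <= 40 * e * s) by nra.
  lra.
Qed.

Lemma pb_f2 : Rabs (- e * sin p * (c * q) ^ 2 + e * cos p * (c * (- c * s * sin p * cos p)) + a * sin z)
  <= 70 * e * s.
Proof.
  pose proof pb_p1.
  replace (- e * sin p * (c * q) ^ 2 + e * cos p * (c * (- c * s * sin p * cos p)) + a * sin z) with
    (- (e * sin p * ((c * q - 1) * (c * q + 1))) - e * (sin p - sin z) + (a - e) * sin z
     - e * (c ^ 2 * s * sin p * cos p ^ 2)) by ring.
  eapply Rle_trans. apply Rabs_triang. rewrite Rabs_Ropp.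
  eapply Rle_trans. apply Rplus_le_compat_r, Rabs_triang.
  eapply Rle_trans. apply Rplus_le_compat_r, Rplus_le_compat_r, Rabs_triang.
  rewrite Rabs_Ropp, !Rabs_mult, (Rabs_right e), (Rabs_right s), (Rabs_right (c ^ 2)) by nra.
  pose proof (sin_lip p z). pose proof (abs_sin_le1 z). pose proof (abs_sin_le1 p). pose proof (abs_cos_le1 p).
  pose proof (Rabs_pos (a - e)). pose proof (Rabs_pos (sin p)). pose proof (Rabs_pos (cos p)).
  pose proof (Rabs_pos (c * q - 1)).
  assert (Rabs (c * q + 1) <= 3) by (rewrite Rabs_right; nra).
  pose proof (Rabs_pos (c * q + 1)).
  assert (Rabs (cos p ^ 2) <= 1) by (rewrite <- RPow_abs; pose proof (Rabs_pos (cos p)); nra).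
  pose proof (Rabs_pos (cos p ^ 2)).
  assert (A1 : Rabs (sin p) * (Rabs (c * q - 1) * Rabs (c * q + 1)) <= 6 * s).
  { assert (Rabs (c * q - 1) * Rabs (c * q + 1) <= 2 * s * 3) by nra. nra. }
  assert (A2 : c ^ 2 * s * Rabs (sin p) * Rabs (cos p ^ 2) <= 3 * s).
  { assert (c ^ 2 <= 9/4) by nra.
    assert (Rabs (sin p) * Rabs (cos p ^ 2) <= 1) by nra.
    assert (0 <= Rabs (sin p) * Rabs (cos p ^ 2)) by (apply Rmult_le_pos; auto).
    assert (0 <= c ^ 2) by nra.
    replace (c ^ 2 * s * Rabs (sin p) * Rabs (cos p ^ 2)) with
      ((c ^ 2 * s) * (Rabs (sin p) * Rabs (cos p ^ 2))) by ring.
    apply Rle_trans with ((9/4 * s) * 1). apply Rmult_le_compat; nra. lra. }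
  rewrite Rabs_Ropp, Rabs_mult, (Rabs_right e) by lra.
  assert (e * Rabs (sin p) * (Rabs (c * q - 1) * Rabs (c * q + 1)) <= e * (6 * s)) by (rewrite Rmult_assoc; apply Rmult_le_compat_l; lra).
  assert (e * (c ^ 2 * s * Rabs (sin p) * Rabs (cos p ^ 2)) <= e * (3 * s)) by (apply Rmult_le_compat_l; lra).
  assert (e * Rabs (sin p - sin z) <= e * (20 * s)) by (apply Rmult_le_compat_l; lra).
  assert (Rabs (a - e) * Rabs (sin z) <= 40 * e * s) by nra.
  lra.
Qed.

End Bounds.

Lemma gen_d1 (P Q : R -> R) e a c z :
  is_derive P z (c * Q z) ->
  is_derive (fun z => e * sin (P z) - a * sin z) z (e * cos (P z) * (c * Q z) - a * cos z).
Proof.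
  intros HP. auto_derive. eexists; eauto.
  replace (Derive (fun x => P x) z) with (c * Q z) by (symmetry; apply is_derive_unique; auto).
  ring.
Qed.

Lemma gen_d2 (P Q : R -> R) e a c s z :
  is_derive P z (c * Q z) -> is_derive Q z (- c * s * sin (P z) * cos (P z)) ->
  is_derive (fun z => e * cos (P z) * (c * Q z) - a * cos z) z 
 ( - e * sin (P z) * (c * Q z) ^ 2
   + e * cos (P z) * (c * (- c * s * sin (P z) * cos (P z))) + a * sin z).
Proof.
  intros HP HQ. auto_derive.
  repeat split; eexists; eauto.
  replace (Derive (fun x => P x) z) with (c * Q z) by (symmetry; apply is_derive_unique; auto).
  replace (Derive (fun x => Q x) z) with (- c * s * sin (P z) * cos (P z)) by (symmetry; apply is_derive_unique; auto).
  ring.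
Qed.

Lemma gen_cont (P Q : R -> R) e a c s z :
  ex_derive P z -> ex_derive Q z ->
  continuous (fun z => (e * sin (P z) - a * sin z) ^ 2 + (e * cos (P z) * (c * Q z) - a * cos z) ^ 2 +
     (- e * sin (P z) * (c * Q z) ^ 2
   + e * cos (P z) * (c * (- c * s * sin (P z) * cos (P z))) + a * sin z) ^ 2) z.
Proof.
  intros HP HQ. apply ex_derive_cont. auto_derive. repeat split; auto.
Qed.

Definition F0 e z := e * sin (ph e z) - aa e * sin z.
Definition F1 e z := e * cos (ph e z) * (cc e * qq e z) - aa e * cos z.
Definition F2 e z := - e * sin (ph e z) * (cc e * qq e z) ^ 2
   + e * cos (ph e z) * (cc e * (- cc e * Sp e * sin (ph e z) * cos (ph e z))) + aa e * sin z.

Lemma qq_ex e z : Hyp e -> ex_derive (qq e) z.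
Proof. intros; eexists; apply qq_derive; auto. Qed.

Lemma F0_derive e z : Hyp e -> is_derive (F0 e) z (F1 e z).
Proof.
  intros H. unfold F0, F1.
  exact (gen_d1 (ph e) (qq e) e (aa e) (cc e) z (ph_derive e z H)).
Qed.

Lemma F1_derive e z : Hyp e -> is_derive (F1 e) z (F2 e z).
Proof.
  intros H. unfold F1, F2.
  exact (gen_d2 (ph e) (qq e) e (aa e) (cc e) (Sp e) z (ph_derive e z H) (qq_derive e z H)).
Qed.

Lemma fun_eq e z : Hyp e -> U (1 - e ^ 2) z - acoef (1 - e ^ 2) * sin z = F0 e z.
Proof. intros H. rewrite U_eq, acoef_eq by auto. unfold F0, aa. ring. Qed.

Lemma D1_eq e z : Hyp e -> Derive (fun z => U (1 - e ^ 2) z - acoef (1 - e ^ 2) * sin z) z = F1 e z.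
Proof.
  intros H. rewrite (Derive_ext _ (F0 e)) by (intros; apply fun_eq; auto).
  apply is_derive_unique, F0_derive; auto.
Qed.

Lemma D2_eq e z : Hyp e -> Derive_n (fun z => U (1 - e ^ 2) z - acoef (1 - e ^ 2) * sin z) 2 z = F2 e z.
Proof.
  intros H. rewrite (Derive_n_ext _ (F0 e)) by (intros; apply fun_eq; auto).
  simpl. rewrite (Derive_ext _ (F1 e)) by (intros; apply is_derive_unique, F0_derive; auto).
  apply is_derive_unique, F1_derive; auto.
Qed.

Lemma F_bounds e z : Hyp e -> 0 <= z <= 2 * PI ->
  Rabs (F0 e z) <= 70 * e * Sp e /\ Rabs (F1 e z) <= 70 * e * Sp e /\ Rabs (F2 e z) <= 70 * e * Sp e.
Proof.
  intros H Hz. pose proof (Hyp_e e H). pose proof (ph_near e z H Hz).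
  destruct (cc_bounds e H) as [Hc1 Hc2]. destruct (qq_bounds e z H) as [Hq1 Hq2].
  pose proof (S_bounds e H) as HS. pose proof (S_nonneg e H).
  assert (Ha : Rabs (aa e - e) <= 40 * e * Sp e).
  { unfold aa. replace (e * Iq e - e) with (e * (Iq e - 1)) by ring.
    rewrite Rabs_mult, (Rabs_right e) by lra. pose proof (Iq_near e H).
    replace (40 * e * Sp e) with (e * (40 * Sp e)) by ring. apply Rmult_le_compat_l; lra. }
  assert (Hs : 0 <= Sp e <= 1/1600) by lra.
  split; [|split].
  - apply (pb_f e (aa e) (ph e z) z (Sp e)); auto; lra.
  - apply (pb_f1 e (aa e) (ph e z) z (cc e) (qq e z) (Sp e)); auto; lra.
  - apply (pb_f2 e (aa e) (ph e z) z (cc e) (qq e z) (Sp e)); auto; lra.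
Qed.

Lemma sq_le y M : Rabs y <= M -> y ^ 2 <= M ^ 2.
Proof.
  intros Hy. rewrite <- (pow2_abs y). pose proof (Rabs_pos y).
  apply pow_incr. lra.
Qed.

Lemma H2_bound e : Hyp e ->
  H2per_norm (fun z => U (1 - e ^ 2) z - acoef (1 - e ^ 2) * sin z) <= 2800 * aa e ^ 3.
Proof.
  intros H. pose proof (Hyp_e e H). pose proof PI_bounds. pose proof (S_bounds e H) as HS.
  unfold H2per_norm.
  rewrite (RInt_ext _ (fun z => F0 e z ^ 2 + F1 e z ^ 2 + F2 e z ^ 2)).
  2:{ intros; rewrite fun_eq, D1_eq, D2_eq by auto. reflexivity. }
  set (M := 70 * e * Sp e).
  assert (HM : 0 <= M) by (unfold M; apply Rmult_le_pos; lra).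
  assert (HI : RInt (fun z => F0 e z ^ 2 + F1 e z ^ 2 + F2 e z ^ 2) 0 (2 * PI) <= (5 * M) ^ 2).
  { eapply Rle_trans. apply (RInt_le_R _ (fun _ => 3 * M ^ 2)). lra.
    - intros; unfold F0, F1, F2.
      apply (gen_cont (ph e) (qq e) e (aa e) (cc e) (Sp e) t (ph_ex e t H) (qq_ex e t H)).
    - intros; apply cont_const.
    - intros t Ht. destruct (F_bounds e t H Ht) as [A1 [A2 A3]]. fold M in A1, A2, A3.
      apply sq_le in A1. apply sq_le in A2. apply sq_le in A3. lra.
    - rewrite RInt_const_R. replace ((5 * M) ^ 2) with (25 * M ^ 2) by ring.
      assert (0 <= M ^ 2) by (apply pow_le; lra). nra. }
  eapply Rle_trans. apply sqrt_le_1_alt. apply HI.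
  rewrite sqrt_pow2 by lra.
  destruct (aa_near e H) as [_ Ha].
  assert (e ^ 3 <= 8 * aa e ^ 3).
  { replace (8 * aa e ^ 3) with ((2 * aa e) ^ 3) by ring. apply pow_incr. lra. }
  unfold M. assert (e * Sp e <= e ^ 3) by (replace (e ^ 3) with (e * e ^ 2) by ring; apply Rmult_le_compat_l; lra).
  lra.
Qed.

Lemma E_param E : 1 - / 1600 < E < 1 -> exists e, Hyp e /\ e < / 40 /\ E = 1 - e ^ 2.
Proof.
  intros HE. exists (sqrt (1 - E)).
  pose proof (pow2_sqrt (1 - E) ltac:(lra)).
  assert (0 < sqrt (1 - E)) by (apply sqrt_lt_R0; lra).
  assert (sqrt (1 - E) < / 40) by nra.
  split. unfold Hyp, e0; lra. split; auto. lra.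
Qed.

Lemma Hyp_e0 : Hyp e0.
Proof. unfold Hyp, e0; lra. Qed.

Lemma lip_cont (g : R -> R) : (forall x y, Rabs (g x - g y) <= 2 * Rabs (x - y)) -> continuity g.
Proof.
  intros Hg x. unfold continuity_pt, continue_in, limit1_in, limit_in. intros eps Heps.
  exists (eps / 2). split. lra. intros y [_ Hy]. simpl in *. unfold Rdist in *.
  pose proof (Hg y x). lra.
Qed.

Lemma clamp_lip lo hi x y : Rabs (Rmax lo (Rmin x hi) - Rmax lo (Rmin y hi)) <= Rabs (x - y).
Proof.
  unfold Rmax, Rmin. repeat destruct Rle_dec; unfold Rabs; repeat destruct Rcase_abs; lra.
Qed.

Lemma surj b : 0 < b < aa e0 -> exists e, Hyp e /\ e < e0 /\ aa e = b.
Proof.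
  intros Hb. destruct (aa_near e0 Hyp_e0) as [_ Ha0].
  set (lo := b / 4).
  assert (Hlo : 0 < lo < e0) by (unfold lo, e0 in *; lra).
  set (g := fun x => aa (Rmax lo (Rmin x e0))).
  assert (Hcl : forall x, Hyp (Rmax lo (Rmin x e0))).
  { intros x. unfold Hyp. unfold Rmax, Rmin. repeat destruct Rle_dec; lra. }
  assert (Hg : continuity g).
  { apply lip_cont. intros x y. unfold g.
    eapply Rle_trans. rewrite Rabs_minus_sym. apply aa_lip; auto.
    rewrite Rabs_minus_sym. pose proof (clamp_lip lo e0 x y). lra. }
  assert (Hglo : g lo = aa lo).
  { unfold g. f_equal. unfold Rmax, Rmin. repeat destruct Rle_dec; lra. }
  assert (Hge0 : g e0 = aa e0).
  { unfold g. f_equal. unfold Rmax, Rmin. repeat destruct Rle_dec; lra. }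
  assert (Halo : aa lo <= 2 * lo) by (apply (aa_near lo); unfold Hyp; lra).
  destruct (IVT_gen g lo e0 b Hg) as [x [Hx Hgx]].
  { rewrite Hglo, Hge0. rewrite Rmin_left, Rmax_right by (unfold lo in *; lra). unfold lo in *; lra. }
  rewrite Rmin_left, Rmax_right in Hx by lra.
  assert (Ex : Rmax lo (Rmin x e0) = x) by (unfold Rmax, Rmin; repeat destruct Rle_dec; lra).
  unfold g in Hgx. rewrite Ex in Hgx.
  exists x. split. unfold Hyp; lra. split; auto.
  destruct (Req_dec x e0) as [E|E]; [|lra]. subst x. lra.
Qed.

Theorem proposition2p1 :
  exists (delta a0 C : R), 0 < delta /\ 0 < a0 /\ 0 < C /\
    (forall E, 1 - delta < E < 1 -> 0 < acoef E < a0) /\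
    (forall E1 E2, 1 - delta < E1 < 1 -> 1 - delta < E2 < 1 ->
        acoef E1 = acoef E2 -> E1 = E2) /\
    (forall b, 0 < b < a0 -> exists E, 1 - delta < E < 1 /\ acoef E = b) /\
    (forall E, 1 - delta < E < 1 ->
       Rabs (E - (1 - acoef E ^ 2)) <= C * acoef E ^ 4 /\
       Rabs (ell E ^ 2 - (1 - 3 / 4 * acoef E ^ 2)) <= C * acoef E ^ 4 /\
       H2per_norm (fun z => U E z - acoef E * sin z) <= C * acoef E ^ 3).
Proof.
  exists (/ 1600), (aa e0), 3000.
  destruct (aa_near e0 Hyp_e0) as [_ Ha0]. unfold e0 in Ha0.
  split; [lra|]. split; [unfold e0 in *; lra|]. split; [lra|].
  split; [|split; [|split]].
  - intros E HE. destruct (E_param E HE) as [e [He [He' ->]]].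
    rewrite acoef_eq by auto. fold (aa e). destruct (aa_near e He) as [_ Ha].
    split. unfold Hyp in He. lra. apply aa_mono; [auto | apply Hyp_e0 | unfold e0; lra].
  - intros E1 E2 H1 H2 Heq.
    destruct (E_param E1 H1) as [e1 [He1 [_ ->]]]. destruct (E_param E2 H2) as [e2 [He2 [_ ->]]].
    rewrite !acoef_eq in Heq by auto. fold (aa e1) (aa e2) in Heq.
    destruct (Rtotal_order e1 e2) as [Hl|[Hq|Hl]].
    + pose proof (aa_mono e1 e2 He1 He2 Hl). lra.
    + subst; auto.
    + pose proof (aa_mono e2 e1 He2 He1 Hl). lra.
  - intros b Hb. destruct (surj b Hb) as [e [He [He' Hab]]].
    exists (1 - e ^ 2). split.
    + unfold Hyp, e0 in *. split; [|nra]. assert (e ^ 2 < / 1600) by nra. lra.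
    + rewrite acoef_eq; [exact Hab | auto].
  - intros E HE. destruct (E_param E HE) as [e [He [He' ->]]].
    rewrite acoef_eq by auto. fold (aa e).
    destruct (aa_near e He) as [_ Ha]. pose proof (Hyp_e e He).
    assert (0 <= aa e ^ 4) by (apply pow_le; lra).
    assert (0 <= aa e ^ 3) by (apply pow_le; lra).
    pose proof (E_expand e He). pose proof (ell_expand e He). pose proof (H2_bound e He) as HH.
    rewrite acoef_eq in HH by auto. fold (aa e) in HH.
    split; [lra|split; lra].
Qed.
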